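(* Let $\varphi,\phi\in\mathbb{R}$ with $\varphi\neq 0$ and consider the two non-commuting reflection matrices in $\operatorname{SU}(1,1)$ $$M_A=\begin{pmatrix} i\cosh\varphi & e^{i\phi}\sinh\varphi\\ e^{-i\phi}\sinh\varphi & -i\cosh\varphi\end{pmatrix},\qquad M_B=\begin{pmatrix} i&0\\0&-i\end{pmatrix}.$$ Let $\Pi_n=M_1M_2\cdots M_n$ where each $M_j$ is drawn independently from $\{M_A,M_B\}$ with probabilities $p_A=p_B=1/2$, and write $\Pi_n=\begin{pmatrix}\alpha_n&\beta_n\\ \beta_n^*&\alpha_n^*\end{pmatrix}$. Define the (chiral) energy per unit cell $E(n)=\frac{\pi c}{12\,l}(|\alpha_n|^2+|\beta_n|^2)$. Then for even $n$, $\mathbb{E}(E(n+2))=\mathbb{E}(E(n))\cdot\cosh^2(\varphi)$, and $\mathbb{E}(E(n+1))=\mathbb{E}(E(n+2))$, so the ensemble-averaged energy grows exponentially with rate $\lambda_E:=\lim_{n\to\infty}\frac{1}{2n}\log\mathbb{E}(E(n))=\frac{1}{2}\log\cosh(\varphi)>0$.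
   Context: Randomly driven (1+1)d CFT with $\operatorname{SL}_2$ (single-wavelength) deformed Hamiltonians; each driving step acts on operators by a Möbius transformation given by an $\operatorname{SU}(1,1)$ matrix. A type I exceptional point is where both driving steps produce reflection (traceless) $\operatorname{SU}(1,1)$ matrices; after an $\operatorname{SU}(1,1)$ conjugation the two matrices can be brought to the form $M_A,M_B$ stated in the claim (a global conjugation does not affect the growth rate). Since $M_A^2=M_B^2=-\mathbb{I}$, for $n=2k$ any product containing $k-r+s$ factors $M_A$ and $k+s-r$ factors $M_B$ equals $(-1)^k\begin{pmatrix}\cosh((k-r-s)\varphi) & ie^{i\phi}\sinh((k-r-s)\varphi)\\ -ie^{-i\phi}\sinh((k-r-s)\varphi) & \cosh((k-r-s)\varphi)\end{pmatrix}$, occurring with total probability $p_{r,s}=2^{-n}\binom{k}{r}\binom{k}{s}$, giving $\mathbb{E}(E(n))=\frac{\pi c}{12 l}\sum_{r,s=0}^k p_{r,s}\cosh[2(k-r-s)\varphi]$. Here $c$ is the central charge and $l$ the deformation wavelength. *)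

(* Defs.v *)
From HB Require Import structures.
From mathcomp Require Import all_boot all_order all_algebra.
From mathcomp Require Import all_classical all_reals all_analysis.
From mathcomp Require Import complex.
Set Implicit Arguments. Unset Strict Implicit. Unset Printing Implicit Defensive.
Import Order.TTheory GRing.Theory Num.Theory.
Local Open Scope ring_scope.
Local Open Scope complex_scope.

Section Defs.
Variable R : realType.

Definition cosh (x : R) : R := (expR x + expR (- x)) / 2.
Definition sinh (x : R) : R := (expR x - expR (- x)) / 2.

Definition expi (t : R) : R[i] := cos t +i* sin t.

Definition mx2 (a b c d : R[i]) : 'M[R[i]]_2 :=
  \matrix_(i < 2, j < 2)
    if (i : nat) == 0%N then (if (j : nat) == 0%N then a else b)
    else (if (j : nat) == 0%N then c else d).

Definition MA (vphi phi : R) : 'M[R[i]]_2 :=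
  mx2 ('i * (cosh vphi)%:C) (expi phi * (sinh vphi)%:C)
      (expi (- phi) * (sinh vphi)%:C) (- 'i * (cosh vphi)%:C).

Definition MB : 'M[R[i]]_2 := mx2 'i 0 0 (- 'i).

(* Pi_n = M_1 M_2 ... M_n, where s k = true means M_{k+1} = M_A, false means M_B *)
Definition Pi (vphi phi : R) (n : nat) (s : {ffun 'I_n -> bool}) : 'M[R[i]]_2 :=
  \prod_(k < n) (if s k then MA vphi phi else MB).

(* E = pi c / (12 l) (|alpha|^2 + |beta|^2), alpha = Pi 0 0, beta = Pi 0 1 *)
Definition energy (c l : R) (M : 'M[R[i]]_2) : R :=
  pi * c / (12 * l) * (ComplexField.Normc.normc (M 0 0) ^+ 2 + ComplexField.Normc.normc (M 0 1) ^+ 2).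

Definition pA : R := 2^-1.
Definition pB : R := 2^-1.
Definition seq_prob (n : nat) (s : {ffun 'I_n -> bool}) : R :=
  \prod_(k < n) (if s k then pA else pB).

Definition meanE (vphi phi c l : R) (n : nat) : R :=
  \sum_(s : {ffun 'I_n -> bool}) seq_prob s * energy c l (Pi vphi phi s).

End Defs.

(* Main.v *)
Require Import Defs.
From HB Require Import structures.
From mathcomp Require Import all_boot all_order all_algebra.
From mathcomp Require Import all_classical all_reals all_analysis.
From mathcomp Require Import complex ring lra.
Import Order.TTheory GRing.Theory Num.Theory.
Import numFieldNormedType.Exports.
Local Open Scope classical_set_scope.
Local Open Scope ring_scope.

Section Alg.
Local Open Scope complex_scope.
Variable R : realType.
Implicit Types a b c d e f g h : R[i].

Lemma mx2E a b c d : ((mx2 a b c d) 0 0 = a) * ((mx2 a b c d) 0 1 = b) *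
  ((mx2 a b c d) 1 0 = c) * ((mx2 a b c d) 1 1 = d).
Proof. by rewrite !mxE. Qed.

Lemma mx2_mul a b c d e f g h :
  mx2 a b c d *m mx2 e f g h = mx2 (a*e+b*g) (a*f+b*h) (c*e+d*g) (c*f+d*h).
Proof.
apply/matrixP => i j; rewrite !mxE !big_ord_recl big_ord0 !mxE.
case: i => [[|[|i]] Hi]; case: j => [[|[|j]] Hj] => /=.
all: try (rewrite /= ?addr0; done).

Qed.

Definition ct (M : 'M[R[i]]_2) := map_mx conjc (M^T).

Lemma ct_mx2 a b c d : ct (mx2 a b c d) = mx2 (conjc a) (conjc c) (conjc b) (conjc d).
Proof.
apply/matrixP => i j; rewrite !mxE.
by case: i => [[|[|i]] Hi]; case: j => [[|[|j]] Hj].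
Qed.

Lemma mx2_scale k a b c d : k *: mx2 a b c d = mx2 (k*a) (k*b) (k*c) (k*d).
Proof.
apply/matrixP => i j; rewrite !mxE.
by case: i => [[|[|i]] Hi]; case: j => [[|[|j]] Hj].
Qed.

Lemma mx2_add a b c d e f g h :
  mx2 a b c d + mx2 e f g h = mx2 (a+e) (b+f) (c+g) (d+h).
Proof.
apply/matrixP => i j; rewrite !mxE.
by case: i => [[|[|i]] Hi]; case: j => [[|[|j]] Hj].
Qed.

Lemma mx2_1 : (1 : 'M[R[i]]_2) = mx2 1 0 0 1.
Proof.
apply/matrixP => i j; rewrite !mxE.
by case: i => [[|[|i]] Hi]; case: j => [[|[|j]] Hj].
Qed.

Lemma ctM (A B : 'M[R[i]]_2) : ct (A *m B) = ct B *m ct A.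
Proof. by rewrite /ct trmx_mul map_mxM. Qed.

Lemma conjcM a b : conjc (a * b) = conjc a * conjc b.
Proof. exact: rmorphM. Qed.
Lemma conjcN a : conjc (- a) = - conjc a.
Proof. exact: rmorphN. Qed.

Lemma imagE : (Num.imaginary : R[i]) = Complex 0 1.
Proof. by []. Qed.

Lemma conj0 : conjc (0 : R[i]) = 0.
Proof. exact: rmorph0. Qed.
Lemma conj1 : conjc (1 : R[i]) = 1.
Proof. exact: rmorph1. Qed.

Lemma conj_i : conjc (Complex 0 1 : R[i]) = - Complex 0 1.
Proof. by apply/eqP; rewrite eq_complex /= oppr0 !eqxx. Qed.

Lemma conj_expi (t : R) : conjc (expi t) = expi (- t).
Proof. by rewrite /expi /conjc cosN sinN. Qed.

Lemma expiN (t : R) : expi t * expi (- t) = 1.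
Proof.
apply/eqP; rewrite eq_complex /= cosN sinN; apply/andP; split; apply/eqP.
  by rewrite -(cos2Dsin2 t); ring.
by ring.
Qed.

Lemma cosh_sinh (x : R) : cosh x ^+ 2 = 1 + sinh x ^+ 2.
Proof.
rewrite /cosh /sinh.
have h : expR x * expR (- x) = 1 by rewrite -expRD subrr expR0.
have -> : ((expR x + expR (- x)) / 2) ^+ 2 = ((expR x - expR (- x)) / 2) ^+ 2 + expR x * expR (- x) by field.
by rewrite h addrC.
Qed.


Variables vphi phi : R.
Definition Mb (b : bool) := if b then MA vphi phi else MB R.
Definition T (X : 'M[R[i]]_2) : 'M[R[i]]_2 :=
  \sum_(b : bool) (2^-1 : R)%:C *: (Mb b *m X *m ct (Mb b)).

Lemma half_C : (2^-1 : R)%:C = (2 : R[i])^-1.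
Proof. by rewrite fmorphV rmorph_nat. Qed.

Lemma hi : (Complex 0 1 : R[i]) * Complex 0 1 = -1.
Proof. by rewrite -expr2 sqr_i. Qed.

Lemma hC : (cosh vphi)%:C * (cosh vphi)%:C = 1 + (sinh vphi)%:C * (sinh vphi)%:C :> R[i].
Proof. by rewrite -!rmorphM -!expr2 cosh_sinh rmorphD rmorph1. Qed.

Lemma T_E X : T X = (2^-1 : R)%:C *: (MA vphi phi *m X *m ct (MA vphi phi)) + (2^-1 : R)%:C *: (MB R *m X *m ct (MB R)).
Proof. by rewrite /T big_bool. Qed.

Lemma T1 : T 1 = mx2 ((cosh vphi)%:C * (cosh vphi)%:C) ('i * expi phi * (cosh vphi)%:C * (sinh vphi)%:C)
   (- 'i * expi (-phi) * (cosh vphi)%:C * (sinh vphi)%:C) ((cosh vphi)%:C * (cosh vphi)%:C).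
Proof.
rewrite T_E /MA ?imagE /MB mx2_1 !mx2_mul !ct_mx2 !mx2_mul !mx2_scale !mx2_add half_C ?imagE.
have hc := hC; move: hc; move: (cosh vphi) (sinh vphi) => C S hc.
rewrite !conjcM !conjcN conj_i !conj_expi !conjc_real ?opprK ?conj0 ?conj1.
have h2 : (2 : R[i]) != 0 by rewrite pnatr_eq0.
have hw := expiN phi.
congr mx2.
all: try field: hi hw hc.
all: try done.
Qed.



Lemma TT1 : T (T 1) = ((cosh vphi)%:C * (cosh vphi)%:C) *: 1.
Proof.
rewrite T1 T_E /MA ?imagE /MB mx2_1 !mx2_mul !ct_mx2 !mx2_mul !mx2_scale !mx2_add half_C ?imagE.
have hc := hC; move: hc; move: (cosh vphi) (sinh vphi) => C S hc.
rewrite !conjcM !conjcN conj_i !conj_expi !conjc_real ?opprK ?conj0 ?conj1.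
have h2 : (2 : R[i]) != 0 by rewrite pnatr_eq0.
have hw := expiN phi.
congr mx2.
all: try field: hi hw hc.
all: try done.
Qed.


Definition fcons {n} (b : bool) (s : {ffun 'I_n -> bool}) : {ffun 'I_n.+1 -> bool} :=
  [ffun i => if unlift ord0 i is Some j then s j else b].

Lemma sum_ffunS (V : nmodType) n (F : {ffun 'I_n.+1 -> bool} -> V) :
  \sum_(s : {ffun 'I_n.+1 -> bool}) F s =
  \sum_(b : bool) \sum_(s : {ffun 'I_n -> bool}) F (fcons b s).
Proof.
rewrite pair_big /=.
rewrite (reindex (fun p : bool * {ffun 'I_n -> bool} => fcons p.1 p.2)) //=.
exists (fun s : {ffun 'I_n.+1 -> bool} => (s ord0, [ffun j => s (lift ord0 j)])).
  move=> [b s] _ /=; congr pair; first by rewrite ffunE unlift_none.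
  by apply/ffunP => j; rewrite !ffunE liftK.
move=> s _ /=; apply/ffunP => i; rewrite ffunE.
by case: unliftP => [j ->|->]; rewrite ?ffunE.
Qed.

Lemma prob_fcons n (b : bool) (s : {ffun 'I_n -> bool}) :
  seq_prob R (fcons b s) = 2^-1 * seq_prob R s :> R.
Proof.
rewrite /seq_prob big_ord_recl ffunE unlift_none.
congr (_ * _); first by case: b.
by apply: eq_bigr => k _; rewrite ffunE liftK.
Qed.

Lemma Pi_fcons n (b : bool) (s : {ffun 'I_n -> bool}) :
  Pi vphi phi (fcons b s) = Mb b *m Pi vphi phi s.
Proof.
rewrite /Pi big_ord_recl ffunE unlift_none mulmxE.
congr (_ * _).
by apply: eq_bigr => k _; rewrite ffunE liftK.
Qed.

Definition Q n := \sum_(s : {ffun 'I_n -> bool})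
  (seq_prob R s)%:C *: (Pi vphi phi s *m ct (Pi vphi phi s)).

Lemma QS n : Q n.+1 = T (Q n).
Proof.
rewrite /Q sum_ffunS /T; apply: eq_bigr => b _.
rewrite mulmx_sumr mulmx_suml scaler_sumr; apply: eq_bigr => s _.
rewrite prob_fcons Pi_fcons ctM rmorphM -scalerA; congr (_ *: _).
by rewrite -scalemxAr -scalemxAl !mulmxA.
Qed.

Lemma Q0 : Q 0 = 1.
Proof.
rewrite /Q (big_pred1 [ffun i : 'I_0 => false]); last first.
  by move=> s /=; apply/esym/eqP/ffunP => -[].
rewrite /seq_prob /Pi !big_ord0 rmorph1 scale1r mul1mx /ct trmx1 map_mx1 ?conj1 //.
Qed.

Lemma T_scale a X : T (a *: X) = a *: T X.
Proof.
rewrite /T scaler_sumr; apply: eq_bigr => b _.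
by rewrite -scalemxAr -scalemxAl !scalerA mulrC.
Qed.

Lemma Q_even k : Q (k.*2) = ((cosh vphi)%:C * (cosh vphi)%:C) ^+ k *: 1.
Proof.
elim: k => [|k IH]; first by rewrite Q0 expr0 scale1r.
by rewrite doubleS !QS IH !T_scale TT1 scalerA exprS mulrC.
Qed.

Lemma Q_odd k : Q (k.*2).+1 = ((cosh vphi)%:C * (cosh vphi)%:C) ^+ k *: T 1.
Proof. by rewrite QS Q_even T_scale. Qed.


Lemma normc2 (z : R[i]) : ((ComplexField.Normc.normc z) ^+ 2)%:C = z * conjc z.
Proof.
case: z => a b; rewrite /ComplexField.Normc.normc /=.
rewrite sqr_sqrtr ?addr_ge0 ?sqr_ge0 //.
apply/eqP; rewrite eq_complex /=; apply/andP; split; apply/eqP; ring.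
Qed.

Lemma mulct00 (P : 'M[R[i]]_2) :
  (P *m ct P) 0 0 = P 0 0 * conjc (P 0 0) + P 0 1 * conjc (P 0 1).
Proof.
have h1 : lift ord0 ord0 = 1 :> 'I_2 by apply/val_inj.
have h0 : ord0 = 0 :> 'I_2 by apply/val_inj.
by rewrite mxE !big_ord_recl big_ord0 !mxE addr0 h1 h0.
Qed.

Lemma summand_C (K p : R) (P : 'M[R[i]]_2) :
  (p * (K * (ComplexField.Normc.normc (P 0 0) ^+ 2 + ComplexField.Normc.normc (P 0 1) ^+ 2)))%:C
  = K%:C * (p%:C * (P *m ct P) 0 0).
Proof.
rewrite mulct00.
have rM : forall x y : R, (x * y)%:C = x%:C * y%:C by move=> x y; exact: rmorphM.
have rD : forall x y : R, (x + y)%:C = x%:C + y%:C by move=> x y; exact: rmorphD.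
rewrite !rM rD !normc2.
ring.
Qed.

Lemma meanE_C (c l : R) n :
  (meanE vphi phi c l n)%:C = (pi * c / (12 * l))%:C * Q n 0 0.
Proof.
rewrite /meanE /Q rmorph_sum summxE mulr_sumr; apply: eq_bigr => s _.
rewrite /energy mxE.
exact: summand_C.
Qed.


Lemma rCM (x y : R) : (x * y)%:C = x%:C * y%:C.
Proof. exact: rmorphM. Qed.
Lemma rCX (x : R) n : (x ^+ n)%:C = x%:C ^+ n.
Proof. exact: rmorphXn. Qed.

Lemma meanE_even (c l : R) k :
  meanE vphi phi c l (k.*2) = (pi * c / (12 * l)) * cosh vphi ^+ (k.*2).
Proof.
apply: complexI; rewrite meanE_C Q_even !mxE eqxx mulr1.
by rewrite [RHS]rCM rCX -mul2n exprM expr2.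
Qed.

Lemma meanE_odd (c l : R) k :
  meanE vphi phi c l (k.*2).+1 = (pi * c / (12 * l)) * cosh vphi ^+ (k.*2).+2.
Proof.
apply: complexI; rewrite meanE_C Q_odd mxE T1 mx2E.
rewrite [RHS]rCM rCX !exprS -mul2n exprM !expr2.
ring.
Qed.

End Alg.

Lemma cosh_gt1 (R : realType) (x : R) : x != 0 -> 1 < cosh x.
Proof.
move=> hx; rewrite /cosh expRN.
have u0 := expR_gt0 x.
move: u0; set u := expR x => u0.
have u1 : u != 1.
  apply/eqP => h; move/eqP: hx; apply; apply: expR_inj; by rewrite expR0.
have v0 : 0 < u^-1 by rewrite invr_gt0.
have huv : u * u^-1 = 1 by rewrite divff // gt_eqF.
have hsq : 0 < (u - 1) * (u - 1).
  case: (ltgtP u 1) => h.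
  - rewrite -mulrNN mulr_gt0 //; lra.
  - rewrite mulr_gt0 //; lra.
  by move: u1; rewrite h eqxx.
have h4 : 0 < (u - 1) * (u - 1) * u^-1 by rewrite mulr_gt0.
have e : (u - 1) * (u - 1) * u^-1 = u * (u * u^-1) - 2 * (u * u^-1) + u^-1 by ring.
rewrite e huv in h4.
lra.
Qed.

Lemma bound_aux (R : realFieldType) (a B x L : R) :
  1 <= x -> -B <= a <= B -> L - B / (x + 1) <= L + a / (2 * x) <= L + B / (x + 1).
Proof.
move=> hx /andP[h1 h2].
have x0 : 0 < x by apply: lt_le_trans hx; exact: ltr01.
have ey : a / (2 * x) * (2 * x) = a by field; rewrite gt_eqF.
have ez : B / (x + 1) * (x + 1) = B by field; rewrite gt_eqF //; lra.
move: ey ez; move: (a / (2 * x)) (B / (x + 1)) => y z ey ez.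
apply/andP; split; nra.
Qed.

Theorem mainTheorem2 (R : realType) (vphi phi c l : R)
  (hvphi : vphi != 0) (hc : 0 < c) (hl : 0 < l) :
  (forall n : nat, ~~ odd n ->
     meanE vphi phi c l n.+2 = meanE vphi phi c l n * cosh vphi ^+ 2 /\
     meanE vphi phi c l n.+1 = meanE vphi phi c l n.+2) /\
  ((fun n : nat => ln (meanE vphi phi c l n) / (2 * n%:R))
     @ \oo --> ln (cosh vphi) / 2) /\
  0 < ln (cosh vphi) / 2.
Proof.
have K0 : 0 < pi * c / (12 * l) by rewrite divr_gt0 ?mulr_gt0 ?pi_gt0.
have C1 := @cosh_gt1 R vphi hvphi.
have C0 : 0 < cosh vphi by apply: lt_trans C1; exact: ltr01.
have form : forall n, meanE vphi phi c l n =
    (pi * c / (12 * l)) * cosh vphi ^+ (n + odd n).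
  move=> n; have hE := odd_double_half n.
  case: (odd n) hE => /= hE; rewrite -hE.
    by rewrite meanE_odd addn1.
  by rewrite add0n meanE_even addn0.
move: K0 form; move: (pi * c / (12 * l)) => K K0 form.
split.
  move=> n hn; rewrite !form /= (negbTE hn) /= !addn0 addn1.
  by rewrite -mulrA -exprD addn2.
split; last by have := ln_gt0 C1; lra.
have lnf : forall n, (0 < n)%N -> ln (meanE vphi phi c l n) / (2 * n%:R) =
    ln (cosh vphi) / 2 + (ln K + ln (cosh vphi) * (odd n)%:R) / (2 * n%:R).
  move=> n n0; rewrite form lnM ?posrE ?exprn_gt0 // lnXn // -[ln (cosh vphi) *+ _]mulr_natr natrD.
  have : n%:R != 0 :> R by rewrite pnatr_eq0 -lt0n.
  move=> nz; field.
  by rewrite nz.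
set L := ln (cosh vphi) / 2.
set B := `|ln K| + `|ln (cosh vphi)|.
have h0 : (fun n => B * harmonic n) @ \oo --> (0 : R).
  rewrite -(mulr0 B); exact: (cvgM (cvg_cst B) cvg_harmonic).
apply: (@squeeze_cvgr nat \oo _ R (fun n => L - B * harmonic n) (fun n => L + B * harmonic n)).
- exists 1%N => // n /= hn.
  rewrite lnf // -/L -addn1 natrD.
  have hx : 1 <= n%:R :> R by rewrite ler1n.
  have a1 := ler_norm (ln K); have a2 := ler_norm (- ln K); rewrite normrN in a2.
  have b1 := ler_norm (ln (cosh vphi)); have b2 := ler_norm (- ln (cosh vphi)).
  rewrite normrN in b2.
  have hB0 : 0 <= `|ln (cosh vphi)| by exact: normr_ge0.
  case: (odd n); rewrite ?mulr1 ?mulr0 ?addr0; apply: bound_aux => //; rewrite /B; apply/andP; split; lra.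
- rewrite -[X in _ --> X]subr0; exact: (cvgB (cvg_cst L) h0).
- rewrite -[X in _ --> X]addr0; exact: (cvgD (cvg_cst L) h0).
Qed.
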